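(* Let $U=(U(n))_{n\ge0}$ be defined by $U(0)=1$ and $U(n+1)=3U(n)+1$ for $n\ge0$. Let $\mathbf{x}$ be the fixed point starting with $a$ of the morphism $a\mapsto aaab$, $b\mapsto b$, and let $\tau$ be the coding $a\mapsto0$, $b\mapsto1$. Then the binary sequence $\tau(\mathbf{x})$ satisfies $C_2(\tau(\mathbf{x}),N)\gg N$, i.e., there is $c>0$ with $C_2(\tau(\mathbf{x}),N)\ge cN$ for all sufficiently large $N$.
   Context: Correlation measure: for $\mathbf{s}$ over $\{0,1\}$, $D=(d_1,d_2)$ with $0\le d_1<d_2$ and $M\in\mathbb{N}$, put $V(\mathbf{s},M,D)=\sum_{n=0}^{M-1}(-1)^{\mathbf{s}(n+d_1)+\mathbf{s}(n+d_2)}$, and $C_2(\mathbf{s},N)=\max_{M,D}|V(\mathbf{s},M,D)|$ over all such $D$ and integers $M$ with $M+d_2\le N$. (For reference: $\tau(\mathbf{x})(n)$ is the output, on the greedy $U$-representation of $n$, of the DFAO with states $A$ (initial, output 0), $B$ (output 0), $C$ (output 1) and transitions $A\xrightarrow{1,2}B$, $A\xrightarrow{3}C$, $B\xrightarrow{0,1,2}B$, $B\xrightarrow{3}C$, $C\xrightarrow{0}C$.) *)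

(* Defs.v *)
From mathcomp Require Import all_boot all_order all_algebra.
Set Implicit Arguments. Unset Strict Implicit. Unset Printing Implicit Defensive.
Import Order.TTheory GRing.Theory Num.Theory.

Inductive letter := La | Lb.

Definition phi_letter (l : letter) : seq letter :=
  match l with La => [:: La; La; La; Lb] | Lb => [:: Lb] end.
Definition phi (w : seq letter) : seq letter := flatten (map phi_letter w).

(* The fixed point x of phi starting with a: x(n) is the n-th letter of
   phi^(n+1)(a); phi^k(a) is a prefix of phi^(k+1)(a) and has length > k,
   so this is the limit word lim_k phi^k(a). *)
Definition xfix (n : nat) : letter := nth La (iter n.+1 phi [:: La]) n.

Definition tau (l : letter) : nat := match l with La => 0 | Lb => 1 end.
Definition tx (n : nat) : nat := tau (xfix n).

Definition corrV (s : nat -> nat) (M d1 d2 : nat) : int :=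
  \sum_(n < M) ((-1) : int) ^+ (s (n + d1)%N + s (n + d2)%N)%N.

Definition C2 (s : nat -> nat) (N : nat) : nat :=
  \max_(d2 < N.+1) \max_(d1 < d2) \max_(M < N.+1 | M + d2 <= N)
     `|corrV s M d1 d2|%N.

(* Main.v *)
Require Import Defs.
From mathcomp Require Import all_boot all_order all_algebra.
From mathcomp Require Import zify ring lra.
Import Order.TTheory GRing.Theory Num.Theory.

Definition W k := iter k phi [:: La].
Fixpoint L k := if k is k'.+1 then 3 * L k' + 1 else 1.

Lemma phi_cat s t : phi (s ++ t) = phi s ++ phi t.
Proof. by rewrite /phi map_cat flatten_cat. Qed.

Lemma W_S k : W k.+1 = W k ++ W k ++ W k ++ [:: Lb].
Proof.
elim: k => [//|k IH].
have E : forall j, phi (W j) = W j.+1 by [].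
by rewrite -E {1}IH !phi_cat E.
Qed.

Lemma size_W k : size (W k) = L k.
Proof. elim: k => [//|k IH]; rewrite W_S !size_cat IH /=; lia. Qed.

Lemma L_gt k : k < L k.
Proof. elim: k => [//|k IH] /=; lia. Qed.

Lemma W_pref k j : exists t, W (k + j) = W k ++ t.
Proof.
elim: j => [|j [t IH]]; first by exists [::]; rewrite addn0 cats0.
exists (t ++ W (k + j) ++ W (k + j) ++ [:: Lb]).
by rewrite addnS W_S {1}IH -catA.
Qed.

Lemma xfix_W n k : n < size (W k) -> xfix n = nth La (W k) n.
Proof.
move=> h; rewrite /xfix -/(W n.+1).
have [hk|hk] := leqP k n.+1.
  have [t E] := W_pref k (n.+1 - k).
  rewrite subnKC in E => //.
  by rewrite E nth_cat h.
have [t E] := W_pref n.+1 (k - n.+1).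
rewrite subnKC in E; last exact: ltnW.
have hn : n < L n.+1 by have := L_gt n.+1; lia.
by rewrite E nth_cat size_W hn.
Qed.

Lemma nth_WS k i : i < 3 * L k -> nth La (W k.+1) i = nth La (W k) (i %% L k).
Proof.
move=> h; rewrite W_S.
have [h1|h1] := ltnP i (L k).
  by rewrite nth_cat size_W h1 modn_small.
rewrite nth_cat size_W ltnNge h1 /=.
have -> : i %% L k = (i - L k) %% L k by rewrite -{1}(subnK h1) modnDr.
have [h2|h2] := ltnP (i - L k) (L k).
  by rewrite nth_cat size_W h2 modn_small.
rewrite nth_cat size_W ltnNge h2 /=.
have -> : (i - L k) %% L k = (i - L k - L k) %% L k
  by rewrite -{1}(subnK h2) modnDr.
have h3 : i - L k - L k < L k by lia.
by rewrite nth_cat size_W h3 modn_small.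
Qed.

Lemma shift k n : n < 2 * L k -> tx (n + L k) = tx n.
Proof.
move=> h; rewrite /tx.
have s : size (W k.+1) = 3 * L k + 1 by rewrite size_W.
rewrite (xfix_W (n + L k) k.+1); last by rewrite s; lia.
rewrite (xfix_W n k.+1); last by rewrite s; lia.
rewrite nth_WS; last by lia.
rewrite nth_WS; last by lia.
by rewrite modnDr.
Qed.

Lemma corr k : corrV tx (2 * L k) 0 (L k) = ((2 * L k)%:R)%R.
Proof.
rewrite /corrV.
transitivity (\sum_(n < 2 * L k) (1 : int))%R.
  apply: eq_bigr => n _.
  rewrite addn0 shift // addnn -muln2 exprM.
  by rewrite sqrr_sign.
by rewrite sumr_const card_ord.
Qed.

Lemma C2_ge k N : 3 * L k <= N -> 2 * L k <= C2 tx N.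
Proof.
move=> h.
have hd2 : L k < N.+1 by lia.
have hd1 : 0 < L k by have := L_gt k; lia.
have hM : 2 * L k < N.+1 by lia.
rewrite /C2.
apply: leq_trans (leq_bigmax (Ordinal hd2)) => /=.
apply: leq_trans (leq_bigmax (Ordinal hd1)) => /=.
apply: leq_trans (leq_bigmax_cond (Ordinal hM) _) => /=; last by lia.
by rewrite corr natz absz_nat.
Qed.

Lemma exk N : 3 <= N -> exists k, 3 * L k <= N /\ N <= 12 * L k.
Proof.
elim: N => [//|N IH] h.
have [h3|h3] := leqP N 2.
  exists 0 => /=; lia.
have [k [h1 h2]] := IH h3.
have [h4|h4] := leqP N.+1 (12 * L k).
  by exists k; split => //; lia.
exists k.+1 => /=; lia.
Qed.

Theorem mainTheorem7 :
  exists c : rat, (0 < c)%R /\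
    exists N0 : nat, forall N : nat, (N0 <= N)%N ->
      (c * N%:R <= (C2 tx N)%:R)%R.
Proof.
exists (1/6)%R; split; first by [].
exists 3 => N hN.
have [k [h1 h2]] := exk N hN.
have h : (N <= 6 * C2 tx N)%N.
  have := C2_ge _ _ h1; lia.
have h' : (N%:R <= 6 * (C2 tx N)%:R :> rat)%R.
  by rewrite -natrM ler_nat.
lra.
Qed.
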